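(* In the half-line setting, let $\mathcal{S}=\{j\ge0:r_j>0\}=\{j_1<j_2<\cdots\}$ (finite or infinite). For each $k$ such that $j_{k+1}$ exists define $$\eta_k=(-1)^{j_k}Q_{j_k}\Big(-\sqrt{\tfrac{p_{j_k}\tilde q_{j_k}}{r_{j_k}}}\,|j_k;O\rangle+\sqrt{\tilde q_{j_k}}\,|j_k;R\rangle\Big)+\sum_{l=j_k+1}^{j_{k+1}-1}(-1)^lQ_l\big(-\sqrt{p_l}|l;L\rangle+\sqrt{q_l}|l;R\rangle\big)+(-1)^{j_{k+1}}Q_{j_{k+1}}\Big(-\sqrt{p_{j_{k+1}}}\,|j_{k+1};L\rangle+\sqrt{\tfrac{p_{j_{k+1}}q_{j_{k+1}}}{r_{j_{k+1}}}}\,|j_{k+1};O\rangle\Big),$$ and, if $|\mathcal{S}|=n<\infty$, define the formal vector $$\eta_n=(-1)^{j_n}Q_{j_n}\Big(-\sqrt{\tfrac{p_{j_n}\tilde q_{j_n}}{r_{j_n}}}\,|j_n;O\rangle+\sqrt{\tilde q_{j_n}}\,|j_n;R\rangle\Big)+\sum_{l=j_n+1}^{\infty}(-1)^lQ_l\big(-\sqrt{p_l}|l;L\rangle+\sqrt{q_l}|l;R\rangle\big).$$ Then a vector $\phi\in\ell^2(A)$ lies in $\mathcal{H}^{(S)}$ if and only if $\phi=\sum_k c_k\eta_k$ (coefficientwise; each arc lies in the support of at most two $\eta_k$) for some complex numbers $c_k$. In particular $\mathcal{H}^{(S)}=\{0\}$ if $\mathcal{S}=\emptyset$. Moreover every $\eta_k$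 that belongs to $\ell^2(A)$ satisfies $U\eta_k=-\eta_k$.
   Context: Half-line setting: $V=\mathbb{Z}_+$, parameters $p_j,q_j,r_j\ge0$ with $p_j+q_j+r_j=1$, $q_0=0$, $p_j>0$ ($j\ge0$), $q_j>0$ ($j\ge1$). Arcs: $|j;R\rangle=\delta_{(j+1,j)}$ ($j\ge0$), $|j;L\rangle=\delta_{(j-1,j)}$ ($j\ge1$), $|j;O\rangle=\delta_{(j,j)}$ when $r_j>0$; arc $(u,v)$ goes from $v$ to $u$. Shift $S$: $|j;R\rangle\leftrightarrow|j+1;L\rangle$, $|j;O\rangle\mapsto|j;O\rangle$. $a_j=\sqrt{q_j}|j;L\rangle+\sqrt{r_j}|j;O\rangle+\sqrt{p_j}|j;R\rangle$, $b_j=Sa_j$. $\Pi_A$ is the orthogonal projection onto the closed span of $\{a_j\}$, $C=2\Pi_A-I$, $U=SC$. $\mathcal{H}^{(R)}$ is the closed span of $\{a_j,b_j:j\ge0\}$ and $\mathcal{H}^{(S)}=(\mathcal{H}^{(R)})^\perp$. $Q_0=1$ and $Q_j=\sqrt{\frac{q_1\cdots q_j}{p_1\cdots p_j\,q_j}}$ for $j\ge1$; $\tilde q_j=q_j$ for $j\ge1$ and $\tilde q_0=1$. *)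

(* Defs.v *)
From Stdlib Require Import Reals List.
Open Scope R_scope.

Record Cplx := mkC { Re : R ; Im : R }.
Definition C0 : Cplx := mkC 0 0.
Definition RtoC (x : R) : Cplx := mkC x 0.
Definition Cadd (z w : Cplx) : Cplx := mkC (Re z + Re w) (Im z + Im w).
Definition Copp (z : Cplx) : Cplx := mkC (- Re z) (- Im z).
Definition Csub (z w : Cplx) : Cplx := Cadd z (Copp w).
Definition Cmul (z w : Cplx) : Cplx :=
  mkC (Re z * Re w - Im z * Im w) (Re z * Im w + Im z * Re w).
Definition Cconj (z : Cplx) : Cplx := mkC (Re z) (- Im z).
Definition Cnorm2 (z : Cplx) : R := Re z * Re z + Im z * Im z.
Fixpoint Csum (f : nat -> Cplx) (n : nat) : Cplx :=
  match n with O => f O | S m => Cadd (Csum f m) (f (S m)) end.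
Fixpoint Csum_lt (f : nat -> Cplx) (n : nat) : Cplx :=
  match n with O => C0 | S m => Cadd (Csum_lt f m) (f m) end.

(* arc (j, DL) = |j;L>, (j, DO) = |j;O>, (j, DR) = |j;R> *)
Inductive dir := DL | DO | DR.

(* a vector on the arc set: only meaningful on valid arcs *)
Definition vec := nat -> dir -> Cplx.

Definition vadd (u v : vec) : vec := fun j d => Cadd (u j d) (v j d).
Definition vsub (u v : vec) : vec := fun j d => Csub (u j d) (v j d).
Definition vopp (u : vec) : vec := fun j d => Copp (u j d).
Definition vscale (c : Cplx) (u : vec) : vec := fun j d => Cmul c (u j d).
Definition vzero : vec := fun _ _ => C0.
Definition vR (u : nat -> dir -> R) : vec := fun j d => RtoC (u j d).

Definition dsum (f : dir -> R) : R := f DL + f DO + f DR.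
Definition dsumC (f : dir -> Cplx) : Cplx := Cadd (Cadd (f DL) (f DO)) (f DR).

Definition shift (u : vec) : vec := fun j d =>
  match d with
  | DR => u (S j) DL
  | DL => match j with O => C0 | S j' => u j' DR end
  | DO => u j DO
  end.

Definition posb (x : R) : bool := if Rlt_dec 0 x then true else false.

Section HalfLine.
Variables p q r : nat -> R.

Definition valid_arc (j : nat) (d : dir) : Prop :=
  match d with DL => (1 <= j)%nat | DO => 0 < r j | DR => True end.

(* l^2(A): supported on arcs, square summable (bounded partial sums) *)
Definition norm2_partial (u : vec) (n : nat) : R :=
  sum_f_R0 (fun j => dsum (fun d => Cnorm2 (u j d))) n.
Definition in_l2 (u : vec) : Prop :=
  (forall j d, ~ valid_arc j d -> u j d = C0) /\
  exists B, forall n, norm2_partial u n <= B.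

Definition norm2_le (u : vec) (e : R) : Prop := forall n, norm2_partial u n <= e.

Definition inner_partial (u v : vec) (n : nat) : Cplx :=
  Csum (fun j => dsumC (fun d => Cmul (Cconj (u j d)) (v j d))) n.
Definition ortho (u v : vec) : Prop :=
  Un_cv (fun n => Re (inner_partial u v n)) 0 /\
  Un_cv (fun n => Im (inner_partial u v n)) 0.

Definition a_vec (j : nat) : vec := vR (fun l d =>
  if Nat.eqb l j then
    match d with DL => sqrt (q j) | DO => sqrt (r j) | DR => sqrt (p j) end
  else 0).
Definition b_vec (j : nat) : vec := shift (a_vec j).

Definition comb_a (c : nat -> Cplx) (N : nat) : vec := fun l d =>
  Csum_lt (fun j => Cmul (c j) (a_vec j l d)) N.
Definition comb_ab (c e : nat -> Cplx) (N : nat) : vec := fun l d =>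
  Csum_lt (fun j => Cadd (Cmul (c j) (a_vec j l d)) (Cmul (e j) (b_vec j l d))) N.

Definition in_span_A (u : vec) : Prop :=
  in_l2 u /\ forall eps, 0 < eps ->
    exists (c : nat -> Cplx) (N : nat), norm2_le (vsub u (comb_a c N)) eps.

Definition in_HR (u : vec) : Prop :=
  in_l2 u /\ forall eps, 0 < eps ->
    exists (c e : nat -> Cplx) (N : nat), norm2_le (vsub u (comb_ab c e N)) eps.

Definition in_HS (u : vec) : Prop :=
  in_l2 u /\ forall w, in_HR w -> ortho w u.

Definition is_projA (u w : vec) : Prop :=
  in_span_A w /\ forall x, in_span_A x -> ortho x (vsub u w).

Definition U_rel (u v : vec) : Prop :=
  exists w, is_projA u w /\
    forall j d, v j d = shift (vsub (vadd w w) u) j d.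

Fixpoint prod1 (f : nat -> R) (n : nat) : R :=
  match n with O => 1 | S m => prod1 f m * f (S m) end.
Definition Qc (j : nat) : R :=
  match j with O => 1 | _ => sqrt (prod1 q j / (prod1 p j * q j)) end.
Definition qt (j : nat) : R := match j with O => 1 | _ => q j end.
Definition sg (j : nat) : R := (-1) ^ j.

Definition no_S_between (j l : nat) : bool :=
  forallb (fun m => negb (posb (r m))) (seq (S j) (l - S j)).

(* eta j, for j = j_k in S: the vector eta_k of the paper.
   Its support runs from j_k to j_{k+1} if j_{k+1} exists (l = j_{k+1} is
   the first l > j with r_l > 0), and to infinity if j_k = j_n is the last
   element of S.  Zero if j is not in S. *)
Definition eta (j : nat) : nat -> dir -> R := fun l d =>
  if negb (posb (r j)) then 0 else
  if Nat.eqb l j then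
    match d with
    | DO => sg j * Qc j * (- sqrt (p j * qt j / r j))
    | DR => sg j * Qc j * sqrt (qt j)
    | DL => 0
    end
  else if andb (Nat.ltb j l) (no_S_between j l) then
    if posb (r l) then
      match d with
      | DL => sg l * Qc l * (- sqrt (p l))
      | DO => sg l * Qc l * sqrt (p l * q l / r l)
      | DR => 0
      end
    else
      match d with
      | DL => sg l * Qc l * (- sqrt (p l))
      | DR => sg l * Qc l * sqrt (q l)
      | DO => 0
      end
  else 0.

Definition etaC (j : nat) : vec := vR (eta j).

(* coefficientwise sum  sum_k c_k eta_k  (indexed by j_k); at an arc at vertex
   l only eta_{j} with j <= l can be nonzero, so the sum is over j <= l *)
Definition eta_comb (c : nat -> Cplx) : vec := fun l d =>
  Csum (fun j => Cmul (c j) (etaC j l d)) l.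

End HalfLine.

(* Main.v *)
Require Import Defs.
From Stdlib Require Import Reals Lra Lia List Psatz.
Open Scope R_scope.

Lemma sum_single (f : nat -> R) (j n : nat) :
  (j <= n)%nat -> (forall l, l <> j -> f l = 0) -> sum_f_R0 f n = f j.
Proof.
  intros Hjn Hf. induction n as [|n IH].
  - assert (j = 0%nat) by lia. subst. reflexivity.
  - destruct (Nat.eq_dec j (S n)) as [->|Hne].
    + simpl. rewrite sum_eq_R0. ring. intros k Hk. apply Hf. lia.
    + simpl. rewrite IH by lia. rewrite (Hf (S n)) by lia. ring.
Qed.

Lemma sum_zero (f : nat -> R) n : (forall l, f l = 0) -> sum_f_R0 f n = 0.
Proof. intros H. apply sum_eq_R0. intros; auto. Qed.

Lemma sum_mono_nonneg (f : nat -> R) n k :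
  (forall l, 0 <= f l) -> sum_f_R0 f n <= sum_f_R0 f (n + k).
Proof.
  intros H. induction k as [|k IH].
  - rewrite Nat.add_0_r. lra.
  - rewrite Nat.add_succ_r. simpl. specialize (H (S (n + k))). lra.
Qed.

Lemma sum_fin_bound (f : nat -> R) M :
  (forall l, 0 <= f l) -> (forall l, (M < l)%nat -> f l = 0) ->
  forall n, sum_f_R0 f n <= sum_f_R0 f M.
Proof.
  intros H0 H1 n. destruct (Compare_dec.le_lt_dec n M) as [Hle|Hlt].
  - replace M with (n + (M - n))%nat by lia. apply sum_mono_nonneg; auto.
  - replace n with (M + (n - M))%nat by lia. generalize (n - M)%nat as k.
    induction k as [|k IH].
    + rewrite Nat.add_0_r. lra.
    + rewrite Nat.add_succ_r. simpl. rewrite H1 by lia. lra.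
Qed.

Lemma sum_lin3 (f g h : nat -> R) a b c N :
  a * sum_f_R0 f N + b * sum_f_R0 g N + c * sum_f_R0 h N =
  sum_f_R0 (fun i => a * f i + b * g i + c * h i) N.
Proof. induction N; simpl; [ring|]. rewrite <- IHN. ring. Qed.

Lemma sum_lin5 (f0 f1 f2 f3 f4 : nat -> R) a1 a2 a3 a4 N :
  sum_f_R0 f0 N + a1 * sum_f_R0 f1 N + a2 * sum_f_R0 f2 N + a3 * sum_f_R0 f3 N + a4 * sum_f_R0 f4 N =
  sum_f_R0 (fun i => f0 i + a1 * f1 i + a2 * f2 i + a3 * f3 i + a4 * f4 i) N.
Proof. induction N; simpl; [ring|]. rewrite <- IHN. ring. Qed.

Lemma sum_sub (f g : nat -> R) N :
  sum_f_R0 f N - sum_f_R0 g N = sum_f_R0 (fun i => f i - g i) N.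
Proof. induction N; simpl; [ring|]. rewrite <- IHN. ring. Qed.

Lemma Rabs_sum_le (f g : nat -> R) n :
  (forall l, Rabs (f l) <= g l) -> Rabs (sum_f_R0 f n) <= sum_f_R0 g n.
Proof.
  intros H. induction n; simpl; auto.
  eapply Rle_trans; [apply Rabs_triang|]. specialize (H (S n)). lra.
Qed.

Lemma cv_const (U : nat -> R) N K :
  Un_cv U 0 -> (forall n, (N <= n)%nat -> U n = K) -> K = 0.
Proof.
  intros Hcv HK. destruct (Req_dec K 0) as [|Hne]; auto. exfalso.
  destruct (Hcv (Rabs K)) as [N' HN']. { apply Rabs_pos_lt; auto. }
  specialize (HN' (max N N') ltac:(lia)). rewrite HK in HN' by lia.
  unfold R_dist in HN'. rewrite Rminus_0_r in HN'. lra.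
Qed.

Definition ReF (u : vec) : nat -> dir -> R := fun l d => Re (u l d).
Definition ImF (u : vec) : nat -> dir -> R := fun l d => Im (u l d).

Lemma Re_Csum f n : Re (Csum f n) = sum_f_R0 (fun j => Re (f j)) n.
Proof. induction n; simpl; auto. rewrite IHn. reflexivity. Qed.
Lemma Im_Csum f n : Im (Csum f n) = sum_f_R0 (fun j => Im (f j)) n.
Proof. induction n; simpl; auto. rewrite IHn. reflexivity. Qed.

Definition ipR (h : vec) (g : nat -> dir -> R) (n : nat) : R :=
  sum_f_R0 (fun l => dsum (fun d => Re (h l d) * g l d)) n.

Lemma inner_real_Re (h u : vec) n : (forall l d, Im (h l d) = 0) ->
  Re (inner_partial h u n) = ipR h (ReF u) n.
Proof.
  intros Hh. unfold inner_partial, ipR. rewrite Re_Csum. apply sum_eq. intros i _.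
  unfold dsumC, dsum, ReF. simpl. rewrite !Hh. ring.
Qed.
Lemma inner_real_Im (h u : vec) n : (forall l d, Im (h l d) = 0) ->
  Im (inner_partial h u n) = ipR h (ImF u) n.
Proof.
  intros Hh. unfold inner_partial, ipR. rewrite Im_Csum. apply sum_eq. intros i _.
  unfold dsumC, dsum, ImF. simpl. rewrite !Hh. ring.
Qed.

Lemma inner_step2_Re (x y h1 h2 u : vec) z1 z2 n :
  (forall l d, Im (h1 l d) = 0) -> (forall l d, Im (h2 l d) = 0) ->
  (forall l d, y l d = Cadd (x l d) (Cadd (Cmul z1 (h1 l d)) (Cmul z2 (h2 l d)))) ->
  Re (inner_partial y u n) = Re (inner_partial x u n)
    + Re z1 * ipR h1 (ReF u) n + Im z1 * ipR h1 (ImF u) n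
    + Re z2 * ipR h2 (ReF u) n + Im z2 * ipR h2 (ImF u) n.
Proof.
  intros H1 H2 Hy. unfold inner_partial, ipR. rewrite !Re_Csum.
  rewrite sum_lin5. apply sum_eq. intros i _.
  unfold dsumC, dsum, ReF, ImF. rewrite !Hy. simpl. rewrite !H1, !H2. ring.
Qed.
Lemma inner_step2_Im (x y h1 h2 u : vec) z1 z2 n :
  (forall l d, Im (h1 l d) = 0) -> (forall l d, Im (h2 l d) = 0) ->
  (forall l d, y l d = Cadd (x l d) (Cadd (Cmul z1 (h1 l d)) (Cmul z2 (h2 l d)))) ->
  Im (inner_partial y u n) = Im (inner_partial x u n)
    + Re z1 * ipR h1 (ImF u) n - Im z1 * ipR h1 (ReF u) n
    + Re z2 * ipR h2 (ImF u) n - Im z2 * ipR h2 (ReF u) n.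
Proof.
  intros H1 H2 Hy. unfold inner_partial, ipR. rewrite !Im_Csum.
  match goal with |- _ = ?a + ?b * ?c - ?d * ?e + ?f * ?g - ?h * ?i =>
    replace (a + b * c - d * e + f * g - h * i) with (a + b * c + (- d) * e + f * g + (-h) * i) by ring end.
  rewrite sum_lin5. apply sum_eq. intros i _.
  unfold dsumC, dsum, ReF, ImF. rewrite !Hy. simpl. rewrite !H1, !H2. ring.
Qed.
Lemma core_bound a b c e s : 0 < s ->
  Rabs (a*b + c*e) <= ((a*a+c*c)/s + s*(b*b+e*e))/2.
Proof.
  intros Hs. apply Rabs_le.
  assert (E1 : ((a*a+c*c)/s + s*(b*b+e*e))/2 - (a*b+c*e) = ((a - s*b)*(a - s*b) + (c - s*e)*(c-s*e))/(2*s)) by (field; lra).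
  assert (E2 : ((a*a+c*c)/s + s*(b*b+e*e))/2 + (a*b+c*e) = ((a + s*b)*(a + s*b) + (c + s*e)*(c+s*e))/(2*s)) by (field; lra).
  assert (0 <= ((a - s*b)*(a - s*b) + (c - s*e)*(c-s*e))/(2*s)).
  { unfold Rdiv; apply Rmult_le_pos; [apply Rplus_le_le_0_compat; apply Rle_0_sqr|]. left; apply Rinv_0_lt_compat; lra. }
  assert (0 <= ((a + s*b)*(a + s*b) + (c + s*e)*(c+s*e))/(2*s)).
  { unfold Rdiv; apply Rmult_le_pos; [apply Rplus_le_le_0_compat; apply Rle_0_sqr|]. left; apply Rinv_0_lt_compat; lra. }
  lra.
Qed.

Lemma term_bound_Re (x u : dir -> Cplx) s : 0 < s ->
  Rabs (Re (dsumC (fun d => Cmul (Cconj (x d)) (u d)))) <=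
  (dsum (fun d => Cnorm2 (x d)) / s + s * dsum (fun d => Cnorm2 (u d))) / 2.
Proof.
  intros Hs. unfold dsumC, dsum, Cnorm2. simpl.
  pose proof (core_bound (Re (x DL)) (Re (u DL)) (Im (x DL)) (Im (u DL)) s Hs).
  pose proof (core_bound (Re (x DO)) (Re (u DO)) (Im (x DO)) (Im (u DO)) s Hs).
  pose proof (core_bound (Re (x DR)) (Re (u DR)) (Im (x DR)) (Im (u DR)) s Hs).
  eapply Rle_trans; [apply Rabs_triang|].
  eapply Rle_trans; [apply Rplus_le_compat_r; apply Rabs_triang|].
  match goal with |- ?L <= _ => assert (L <=
   ((Re (x DL) * Re (x DL) + Im (x DL) * Im (x DL))/s + s*(Re (u DL)*Re (u DL) + Im (u DL) * Im (u DL)))/2 +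
   ((Re (x DO) * Re (x DO) + Im (x DO) * Im (x DO))/s + s*(Re (u DO)*Re (u DO) + Im (u DO) * Im (u DO)))/2 +
   ((Re (x DR) * Re (x DR) + Im (x DR) * Im (x DR))/s + s*(Re (u DR)*Re (u DR) + Im (u DR) * Im (u DR)))/2) end.
  { replace (Re (x DL) * Re (u DL) - - Im (x DL) * Im (u DL)) with (Re (x DL) * Re (u DL) + Im (x DL) * Im (u DL)) by ring.
    replace (Re (x DO) * Re (u DO) - - Im (x DO) * Im (u DO)) with (Re (x DO) * Re (u DO) + Im (x DO) * Im (u DO)) by ring.
    replace (Re (x DR) * Re (u DR) - - Im (x DR) * Im (u DR)) with (Re (x DR) * Re (u DR) + Im (x DR) * Im (u DR)) by ring.
    lra. }
  eapply Rle_trans; [exact H2|]. right. field. lra.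
Qed.

Lemma term_bound_Im (x u : dir -> Cplx) s : 0 < s ->
  Rabs (Im (dsumC (fun d => Cmul (Cconj (x d)) (u d)))) <=
  (dsum (fun d => Cnorm2 (x d)) / s + s * dsum (fun d => Cnorm2 (u d))) / 2.
Proof.
  intros Hs. unfold dsumC, dsum, Cnorm2. simpl.
  pose proof (core_bound (Re (x DL)) (Im (u DL)) (- Im (x DL)) (Re (u DL)) s Hs).
  pose proof (core_bound (Re (x DO)) (Im (u DO)) (- Im (x DO)) (Re (u DO)) s Hs).
  pose proof (core_bound (Re (x DR)) (Im (u DR)) (- Im (x DR)) (Re (u DR)) s Hs).
  eapply Rle_trans; [apply Rabs_triang|].
  eapply Rle_trans; [apply Rplus_le_compat_r; apply Rabs_triang|].
  match goal with |- ?L <= _ => assert (L <=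
   ((Re (x DL) * Re (x DL) + - Im (x DL) * - Im (x DL))/s + s*(Im (u DL)*Im (u DL) + Re (u DL) * Re (u DL)))/2 +
   ((Re (x DO) * Re (x DO) + - Im (x DO) * - Im (x DO))/s + s*(Im (u DO)*Im (u DO) + Re (u DO) * Re (u DO)))/2 +
   ((Re (x DR) * Re (x DR) + - Im (x DR) * - Im (x DR))/s + s*(Im (u DR)*Im (u DR) + Re (u DR) * Re (u DR)))/2) end.
  { lra. }
  eapply Rle_trans; [exact H2|]. right. field. lra.
Qed.

Lemma sum_half (A B : nat -> R) s n : 0 < s ->
  sum_f_R0 (fun l => (A l / s + s * B l) / 2) n = (sum_f_R0 A n / s + s * sum_f_R0 B n) / 2.
Proof. intros Hs. induction n; simpl; [reflexivity|]. rewrite IHn. field. lra. Qed.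

Lemma inner_bound_Re (x u : vec) n s : 0 < s ->
  Rabs (Re (inner_partial x u n)) <= (norm2_partial x n / s + s * norm2_partial u n) / 2.
Proof.
  intros Hs. unfold inner_partial, norm2_partial. rewrite Re_Csum. rewrite <- sum_half by auto.
  apply Rabs_sum_le. intros l. apply term_bound_Re; auto.
Qed.
Lemma inner_bound_Im (x u : vec) n s : 0 < s ->
  Rabs (Im (inner_partial x u n)) <= (norm2_partial x n / s + s * norm2_partial u n) / 2.
Proof.
  intros Hs. unfold inner_partial, norm2_partial. rewrite Im_Csum. rewrite <- sum_half by auto.
  apply Rabs_sum_le. intros l. apply term_bound_Im; auto.
Qed.

Lemma inner_split_Re (w v u : vec) n :
  Re (inner_partial w u n) = Re (inner_partial (vsub w v) u n) + Re (inner_partial v u n).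
Proof.
  unfold inner_partial. rewrite !Re_Csum, <- sum_plus. apply sum_eq. intros i _.
  unfold dsumC, dsum, vsub, Csub. simpl. ring.
Qed.
Lemma inner_split_Im (w v u : vec) n :
  Im (inner_partial w u n) = Im (inner_partial (vsub w v) u n) + Im (inner_partial v u n).
Proof.
  unfold inner_partial. rewrite !Im_Csum, <- sum_plus. apply sum_eq. intros i _.
  unfold dsumC, dsum, vsub, Csub. simpl. ring.
Qed.

Lemma sq_nonneg x : 0 <= x * x.
Proof. apply Rle_0_sqr. Qed.

Lemma dsum_norm_nonneg (f : dir -> Cplx) : 0 <= dsum (fun d => Cnorm2 (f d)).
Proof.
  unfold dsum, Cnorm2.
  pose proof (sq_nonneg (Re (f DL))); pose proof (sq_nonneg (Im (f DL)));
  pose proof (sq_nonneg (Re (f DO))); pose proof (sq_nonneg (Im (f DO)));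
  pose proof (sq_nonneg (Re (f DR))); pose proof (sq_nonneg (Im (f DR))). lra.
Qed.

Lemma norm2_nonneg (u : vec) n : 0 <= norm2_partial u n.
Proof.
  unfold norm2_partial. induction n; simpl.
  - apply dsum_norm_nonneg.
  - pose proof (dsum_norm_nonneg (u (S n))). lra.
Qed.

Lemma closure_gen (w u : vec) B :
  (forall n, norm2_partial u n <= B) ->
  (forall eps, 0 < eps -> exists v N, norm2_le (vsub w v) eps /\
      forall n, (N <= n)%nat -> Re (inner_partial v u n) = 0 /\ Im (inner_partial v u n) = 0) ->
  ortho w u.
Proof.
  intros HB Happ.
  assert (HB0 : 0 <= B) by (eapply Rle_trans; [apply (norm2_nonneg u 0)| apply HB]).
  assert (key : forall delta, 0 < delta -> exists N, forall n, (N <= n)%nat ->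
     Rabs (Re (inner_partial w u n)) < delta /\ Rabs (Im (inner_partial w u n)) < delta).
  { intros delta Hd. set (s := delta / (B + 1)).
    assert (Hs : 0 < s) by (unfold s; apply Rdiv_lt_0_compat; lra).
    assert (HsB : s * B < delta).
    { unfold s. apply (Rmult_lt_reg_r (B+1)); [lra|]. field_simplify; [nra|lra]. }
    destruct (Happ (delta * s / 2)) as [v [N [Hn Hv]]]. { apply Rdiv_lt_0_compat; [nra|lra]. }
    exists N. intros n Hn'. destruct (Hv n Hn') as [Hr Hi].
    assert (Hb : (norm2_partial (vsub w v) n / s + s * norm2_partial u n) / 2 < delta).
    { assert (norm2_partial (vsub w v) n / s <= delta / 2).
      { apply (Rmult_le_reg_r s); auto. unfold Rdiv. rewrite Rmult_assoc, Rinv_l by lra.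
        specialize (Hn n). lra. }
      assert (s * norm2_partial u n <= s * B) by (apply Rmult_le_compat_l; [lra| auto]).
      lra. }
    rewrite (inner_split_Re w v), (inner_split_Im w v), Hr, Hi, !Rplus_0_r.
    split.
    - eapply Rle_lt_trans; [apply (inner_bound_Re _ _ _ s Hs)| exact Hb].
    - eapply Rle_lt_trans; [apply (inner_bound_Im _ _ _ s Hs)| exact Hb]. }
  split; intros eps Heps; destruct (key eps Heps) as [N HN]; exists N; intros n Hn;
    unfold R_dist; rewrite Rminus_0_r; apply HN; lia.
Qed.
Definition EAv (p q r : nat -> R) (f : nat -> dir -> R) (j : nat) : R :=
  sqrt (q j) * f j DL + sqrt (r j) * f j DO + sqrt (p j) * f j DR.
Definition EBv (p q r : nat -> R) (f : nat -> dir -> R) (j : nat) : R :=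
  (match j with O => 0 | S j' => sqrt (q j) * f j' DR end) + sqrt (r j) * f j DO + sqrt (p j) * f (S j) DL.

Lemma a_Im p q r j l d : Im (a_vec p q r j l d) = 0.
Proof. reflexivity. Qed.
Lemma b_Im p q r j l d : Im (b_vec p q r j l d) = 0.
Proof. destruct d, l; reflexivity. Qed.

Lemma a_zero p q r j l d : l <> j -> a_vec p q r j l d = C0.
Proof. intros H. unfold a_vec, vR. rewrite (proj2 (Nat.eqb_neq _ _) H). reflexivity. Qed.

Lemma ipR_a p q r j g n : (j <= n)%nat -> ipR (a_vec p q r j) g n = EAv p q r g j.
Proof.
  intros H. unfold ipR. rewrite (sum_single _ j n H).
  - unfold dsum, EAv, a_vec, vR, RtoC. simpl. rewrite Nat.eqb_refl. reflexivity.
  - intros l Hl. unfold dsum. rewrite !(a_zero p q r j l) by auto. simpl. ring.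
Qed.

Lemma ipR_b p q r j g n : (S j <= n)%nat -> ipR (b_vec p q r j) g n = EBv p q r g j.
Proof.
  intros H. unfold ipR, dsum.
  rewrite !sum_plus.
  rewrite (sum_single (fun l => Re (b_vec p q r j l DL) * g l DL) (S j) n H).
  2:{ intros l Hl. destruct l; [simpl; ring|]. unfold b_vec, shift.
      rewrite a_zero by lia. simpl. ring. }
  rewrite (sum_single (fun l => Re (b_vec p q r j l DO) * g l DO) j n) by
    (lia || (intros l Hl; unfold b_vec, shift; rewrite a_zero by lia; simpl; ring)).
  unfold EBv. unfold b_vec, shift, a_vec, vR, RtoC; simpl. rewrite !Nat.eqb_refl.
  destruct j as [|j'].
  - rewrite sum_zero. ring. intros l. ring.
  - rewrite (sum_single _ j' n) by (lia || (intros l Hl; rewrite (proj2 (Nat.eqb_neq _ _)) by lia; ring)).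
    rewrite Nat.eqb_refl. ring.
Qed.

Lemma sum_lin2 (f0 f1 f2 : nat -> R) a1 a2 N :
  sum_f_R0 f0 N + a1 * sum_f_R0 f1 N + a2 * sum_f_R0 f2 N =
  sum_f_R0 (fun i => f0 i + a1 * f1 i + a2 * f2 i) N.
Proof. induction N; simpl; [ring|]. rewrite <- IHN. ring. Qed.

Lemma inner_step1_Re (x y h1 u : vec) z1 n :
  (forall l d, Im (h1 l d) = 0) ->
  (forall l d, y l d = Cadd (x l d) (Cmul z1 (h1 l d))) ->
  Re (inner_partial y u n) = Re (inner_partial x u n)
    + Re z1 * ipR h1 (ReF u) n + Im z1 * ipR h1 (ImF u) n.
Proof.
  intros H1 Hy. unfold inner_partial, ipR. rewrite !Re_Csum.
  rewrite sum_lin2. apply sum_eq. intros i _.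
  unfold dsumC, dsum, ReF, ImF. rewrite !Hy. simpl. rewrite !H1. ring.
Qed.

Lemma inner_step1_Im (x y h1 u : vec) z1 n :
  (forall l d, Im (h1 l d) = 0) ->
  (forall l d, y l d = Cadd (x l d) (Cmul z1 (h1 l d))) ->
  Im (inner_partial y u n) = Im (inner_partial x u n)
    + Re z1 * ipR h1 (ImF u) n + (- Im z1) * ipR h1 (ReF u) n.
Proof.
  intros H1 Hy. unfold inner_partial, ipR. rewrite !Im_Csum.
  rewrite sum_lin2. apply sum_eq. intros i _.
  unfold dsumC, dsum, ReF, ImF. rewrite !Hy. simpl. rewrite !H1. ring.
Qed.

Lemma inner_zero_Re (x u : vec) n : (forall l d, x l d = C0) ->
  Re (inner_partial x u n) = 0 /\ Im (inner_partial x u n) = 0.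
Proof.
  intros H. unfold inner_partial. rewrite Re_Csum, Im_Csum. split; apply sum_zero; intros l;
  unfold dsumC; rewrite !H; simpl; ring.
Qed.

Definition loc_eqs p q r (f : nat -> dir -> R) : Prop :=
  forall j, EAv p q r f j = 0 /\ EBv p q r f j = 0.

Lemma comb_ab_vanish p q r (u : vec) c e :
  loc_eqs p q r (ReF u) -> loc_eqs p q r (ImF u) ->
  forall N n, (N <= n)%nat ->
  Re (inner_partial (comb_ab p q r c e N) u n) = 0 /\ Im (inner_partial (comb_ab p q r c e N) u n) = 0.
Proof.
  intros HR HI N. induction N as [|N IH]; intros n Hn.
  - apply inner_zero_Re. intros; reflexivity.
  - destruct (IH n ltac:(lia)) as [IH1 IH2].
    destruct (HR N) as [HRa HRb]. destruct (HI N) as [HIa HIb].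
    split.
    + rewrite (inner_step2_Re (comb_ab p q r c e N) _ (a_vec p q r N) (b_vec p q r N) u (c N) (e N) n);
        [| apply a_Im | apply b_Im | intros; reflexivity].
      rewrite IH1, !ipR_a, !ipR_b by lia. rewrite HRa, HRb, HIa, HIb. ring.
    + rewrite (inner_step2_Im (comb_ab p q r c e N) _ (a_vec p q r N) (b_vec p q r N) u (c N) (e N) n);
        [| apply a_Im | apply b_Im | intros; reflexivity].
      rewrite IH2, !ipR_a, !ipR_b by lia. rewrite HRa, HRb, HIa, HIb. ring.
Qed.

Lemma comb_a_vanish p q r (u : vec) c :
  loc_eqs p q r (ReF u) -> loc_eqs p q r (ImF u) ->
  forall N n, (N <= n)%nat ->
  Re (inner_partial (comb_a p q r c N) u n) = 0 /\ Im (inner_partial (comb_a p q r c N) u n) = 0.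
Proof.
  intros HR HI N. induction N as [|N IH]; intros n Hn.
  - apply inner_zero_Re. intros; reflexivity.
  - destruct (IH n ltac:(lia)) as [IH1 IH2].
    destruct (HR N) as [HRa HRb]. destruct (HI N) as [HIa HIb].
    split.
    + rewrite (inner_step1_Re (comb_a p q r c N) _ (a_vec p q r N) u (c N) n);
        [| apply a_Im | intros; reflexivity].
      rewrite IH1, !ipR_a by lia. rewrite HRa, HIa. ring.
    + rewrite (inner_step1_Im (comb_a p q r c N) _ (a_vec p q r N) u (c N) n);
        [| apply a_Im | intros; reflexivity].
      rewrite IH2, !ipR_a by lia. rewrite HRa, HIa. ring.
Qed.

Lemma ortho_HR p q r (u : vec) B :
  loc_eqs p q r (ReF u) -> loc_eqs p q r (ImF u) ->
  (forall n, norm2_partial u n <= B) ->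
  forall w, in_HR p q r w -> ortho w u.
Proof.
  intros HR HI HB w [_ Hw]. apply (closure_gen w u B HB).
  intros eps Heps. destruct (Hw eps Heps) as [c [e [N HN]]].
  exists (comb_ab p q r c e N), N. split; auto.
  intros n Hn. apply comb_ab_vanish; auto.
Qed.

Lemma ortho_A p q r (u : vec) B :
  loc_eqs p q r (ReF u) -> loc_eqs p q r (ImF u) ->
  (forall n, norm2_partial u n <= B) ->
  forall w, in_span_A p q r w -> ortho w u.
Proof.
  intros HR HI HB w [_ Hw]. apply (closure_gen w u B HB).
  intros eps Heps. destruct (Hw eps Heps) as [c [N HN]].
  exists (comb_a p q r c N), N. split; auto.
  intros n Hn. apply comb_a_vanish; auto.
Qed.

Definition cdelta (j : nat) (z : Cplx) : nat -> Cplx := fun i => if Nat.eqb i j then z else C0.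

Lemma comb_delta p q r j al be l d : forall N,
  Re (comb_ab p q r (cdelta j (RtoC al)) (cdelta j (RtoC be)) N l d) =
    (if Nat.ltb j N then al * Re (a_vec p q r j l d) + be * Re (b_vec p q r j l d) else 0) /\
  Im (comb_ab p q r (cdelta j (RtoC al)) (cdelta j (RtoC be)) N l d) = 0.
Proof.
  induction N as [|N [IH1 IH2]].
  - simpl. auto.
  - change (comb_ab p q r (cdelta j (RtoC al)) (cdelta j (RtoC be)) (S N) l d) with
      (Cadd (comb_ab p q r (cdelta j (RtoC al)) (cdelta j (RtoC be)) N l d)
        (Cadd (Cmul (cdelta j (RtoC al) N) (a_vec p q r N l d)) (Cmul (cdelta j (RtoC be) N) (b_vec p q r N l d)))).
    cbn [Re Im Cadd Cmul]. rewrite IH1, IH2, a_Im, b_Im. unfold cdelta.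
    destruct (Nat.eqb_spec N j) as [->|Hne].
    + rewrite (proj2 (Nat.ltb_ge j j)) by lia. rewrite (proj2 (Nat.ltb_lt j (S j))) by lia.
      simpl. split; ring.
    + simpl. destruct (Nat.ltb_spec j N); destruct (Nat.ltb_spec j (S N)); try lia; split; ring.
Qed.

Lemma b_zero p q r j l d : (S j < l)%nat -> b_vec p q r j l d = C0.
Proof.
  intros H. destruct d; unfold b_vec, shift.
  - destruct l; [lia|]. apply a_zero. lia.
  - apply a_zero. lia.
  - apply a_zero. lia.
Qed.

Lemma Cnorm2_C0 : Cnorm2 C0 = 0.
Proof. unfold Cnorm2; simpl; ring. Qed.

Lemma a_in_l2 p q r (Hr : forall j, 0 <= r j) (Hq0 : q 0%nat = 0) j : in_l2 r (a_vec p q r j).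
Proof.
  split.
  - intros l d Hv. destruct (Nat.eq_dec l j) as [->|Hne]; [|apply a_zero; auto].
    destruct d; simpl in Hv.
    + assert (j = 0%nat) by lia. subst. unfold a_vec, vR. simpl. rewrite Hq0, sqrt_0. reflexivity.
    + assert (r j = 0) by (specialize (Hr j); lra). unfold a_vec, vR. rewrite Nat.eqb_refl, H, sqrt_0. reflexivity.
    + tauto.
  - exists (norm2_partial (a_vec p q r j) j). unfold norm2_partial. apply sum_fin_bound.
    + intros; apply dsum_norm_nonneg.
    + intros l Hl. unfold dsum. rewrite !a_zero by lia. rewrite Cnorm2_C0. ring.
Qed.

Lemma b_in_l2 p q r (Hr : forall j, 0 <= r j) j : in_l2 r (b_vec p q r j).
Proof.
  split.
  - intros l d Hv. destruct d; simpl in Hv.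
    + assert (l = 0%nat) by lia. subst. reflexivity.
    + assert (r l = 0) by (specialize (Hr l); lra). unfold b_vec, shift, a_vec, vR.
      destruct (Nat.eqb_spec l j) as [->|]; [rewrite H, sqrt_0|]; reflexivity.
    + tauto.
  - exists (norm2_partial (b_vec p q r j) (S j)). unfold norm2_partial. apply sum_fin_bound.
    + intros; apply dsum_norm_nonneg.
    + intros l Hl. unfold dsum. rewrite !b_zero by lia. rewrite Cnorm2_C0. ring.
Qed.

Lemma delta_in_HR p q r (h : vec) j al be :
  in_l2 r h ->
  (forall l d, Re (h l d) = al * Re (a_vec p q r j l d) + be * Re (b_vec p q r j l d)) ->
  (forall l d, Im (h l d) = 0) ->
  in_HR p q r h.
Proof.
  intros Hl2 HRe HIm. split; auto. intros eps Heps.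
  exists (cdelta j (RtoC al)), (cdelta j (RtoC be)), (S j). intros n.
  unfold norm2_partial. rewrite sum_zero; [lra|]. intros l. unfold dsum.
  destruct (comb_delta p q r j al be l DL (S j)) as [A1 A2].
  destruct (comb_delta p q r j al be l DO (S j)) as [B1 B2].
  destruct (comb_delta p q r j al be l DR (S j)) as [C1 C2].
  rewrite (proj2 (Nat.ltb_lt j (S j))) in A1, B1, C1 by lia.
  unfold Cnorm2, vsub, Csub, Cadd, Copp. cbn [Re Im].
  rewrite A1, A2, B1, B2, C1, C2, !HRe, !HIm. ring.
Qed.

Lemma a_in_HR p q r (Hr : forall j, 0 <= r j) (Hq0 : q 0%nat = 0) j : in_HR p q r (a_vec p q r j).
Proof.
  apply (delta_in_HR p q r _ j 1 0); [apply a_in_l2; auto | intros; ring | apply a_Im].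
Qed.
Lemma b_in_HR p q r (Hr : forall j, 0 <= r j) j : in_HR p q r (b_vec p q r j).
Proof.
  apply (delta_in_HR p q r _ j 0 1); [apply b_in_l2; auto | intros; ring | apply b_Im].
Qed.

Lemma HS_loc p q r (Hr : forall j, 0 <= r j) (Hq0 : q 0%nat = 0) (u : vec) :
  in_HS p q r u -> loc_eqs p q r (ReF u) /\ loc_eqs p q r (ImF u).
Proof.
  intros [_ Hort].
  split; intros j.
  - destruct (Hort _ (a_in_HR p q r Hr Hq0 j)) as [Ha _].
    destruct (Hort _ (b_in_HR p q r Hr j)) as [Hb _]. split.
    + apply (cv_const _ j _ Ha). intros n Hn. rewrite inner_real_Re by apply a_Im. apply ipR_a; auto.
    + apply (cv_const _ (S j) _ Hb). intros n Hn. rewrite inner_real_Re by apply b_Im. apply ipR_b; auto.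
  - destruct (Hort _ (a_in_HR p q r Hr Hq0 j)) as [_ Ha].
    destruct (Hort _ (b_in_HR p q r Hr j)) as [_ Hb]. split.
    + apply (cv_const _ j _ Ha). intros n Hn. rewrite inner_real_Im by apply a_Im. apply ipR_a; auto.
    + apply (cv_const _ (S j) _ Hb). intros n Hn. rewrite inner_real_Im by apply b_Im. apply ipR_b; auto.
Qed.

Lemma posb_true x : 0 < x -> posb x = true.
Proof. intros H. unfold posb. destruct (Rlt_dec 0 x); auto; lra. Qed.
Lemma posb_false x : ~ 0 < x -> posb x = false.
Proof. intros H. unfold posb. destruct (Rlt_dec 0 x); auto; lra. Qed.
Lemma posb_spec x : posb x = true <-> 0 < x.
Proof. unfold posb. destruct (Rlt_dec 0 x); split; intros; auto; discriminate || lra. Qed.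

Lemma nsb_iff r j l : no_S_between r j l = true <-> (forall m, (j < m < l)%nat -> ~ 0 < r m).
Proof.
  unfold no_S_between. rewrite forallb_forall. split.
  - intros H m Hm Hr. specialize (H m). rewrite in_seq in H.
    assert (E : negb (posb (r m)) = true) by (apply H; lia).
    rewrite posb_true in E by auto. discriminate.
  - intros H m Hm. rewrite in_seq in Hm. rewrite posb_false; auto. apply H. lia.
Qed.

Lemma nsb_S_true r i l : (i < l)%nat -> no_S_between r i l = true -> ~ 0 < r l ->
  no_S_between r i (S l) = true.
Proof.
  rewrite !nsb_iff. intros _ H Hl m Hm. destruct (Nat.eq_dec m l) as [->|]; auto. apply H; lia.
Qed.
Lemma nsb_S_false1 r i l : no_S_between r i l = false -> no_S_between r i (S l) = false.
Proof.
  intros H. destruct (no_S_between r i (S l)) eqn:E; auto.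
  rewrite nsb_iff in E. assert (no_S_between r i l = true) by (rewrite nsb_iff; intros; apply E; lia).
  congruence.
Qed.
Lemma nsb_S_false2 r i l : (i < l)%nat -> 0 < r l -> no_S_between r i (S l) = false.
Proof.
  intros H1 H2. destruct (no_S_between r i (S l)) eqn:E; auto.
  rewrite nsb_iff in E. exfalso. apply (E l); auto; lia.
Qed.
Lemma nsb_succ r i : no_S_between r i (S i) = true.
Proof. unfold no_S_between. rewrite Nat.sub_diag. reflexivity. Qed.

Lemma prod1_pos (f : nat -> R) : (forall k, (1 <= k)%nat -> 0 < f k) -> forall n, 0 < prod1 f n.
Proof.
  intros H n. induction n; simpl; [lra|]. apply Rmult_lt_0_compat; auto. apply H; lia.
Qed.

Lemma qt_pos q (Hqpos : forall j, (1 <= j)%nat -> 0 < q j) j : 0 < qt q j.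
Proof. destruct j; simpl; [lra|]. apply Hqpos; lia. Qed.

Lemma Qc_pos p q (Hppos : forall j, 0 < p j) (Hqpos : forall j, (1 <= j)%nat -> 0 < q j) j : 0 < Qc p q j.
Proof.
  destruct j; simpl; [lra|]. apply sqrt_lt_R0. apply Rdiv_lt_0_compat.
  - apply Rmult_lt_0_compat; [apply prod1_pos; auto|apply Hqpos; lia].
  - apply Rmult_lt_0_compat; [apply Rmult_lt_0_compat; [apply prod1_pos; auto|auto]|apply Hqpos; lia].
Qed.

Lemma Qc_rec p q (Hppos : forall j, 0 < p j) (Hqpos : forall j, (1 <= j)%nat -> 0 < q j) m :
  Qc p q (S m) * sqrt (p (S m)) = Qc p q m * sqrt (qt q m).
Proof.
  assert (Pp := prod1_pos p (fun k _ => Hppos k)). assert (Pq := prod1_pos q Hqpos).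
  assert (HqS : 0 < q (S m)) by (apply Hqpos; lia). assert (HpS := Hppos (S m)).
  unfold Qc at 1. simpl prod1. rewrite <- sqrt_mult_alt.
  2:{ left. apply Rdiv_lt_0_compat; [apply Rmult_lt_0_compat; auto|].
      apply Rmult_lt_0_compat; [apply Rmult_lt_0_compat; auto|auto]. }
  destruct m as [|k].
  - transitivity (sqrt 1); [f_equal; simpl; field; lra | simpl; rewrite sqrt_1; ring].
  - assert (Hqk : 0 < q (S k)) by (apply Hqpos; lia).
    unfold Qc, qt. rewrite <- sqrt_mult_alt.
    2:{ left. apply Rdiv_lt_0_compat; [apply Pq|]. apply Rmult_lt_0_compat; auto. }
    f_equal. specialize (Pp (S k)). specialize (Pq (S k)). field. lra.
Qed.

Lemma key_sqrt a b x : 0 < a -> 0 <= b -> 0 <= x -> sqrt a * sqrt (b * x / a) = sqrt b * sqrt x.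
Proof.
  intros Ha Hb Hx. rewrite <- sqrt_mult_alt by lra. rewrite <- sqrt_mult by auto.
  f_equal. field. lra.
Qed.

Lemma sg_S j : sg (S j) = - sg j.
Proof. unfold sg. simpl. ring. Qed.

Lemma eta_neg p q r i l d : (l < i)%nat -> eta p q r i l d = 0.
Proof.
  intros H. unfold eta. destruct (negb (posb (r i))); auto.
  rewrite (proj2 (Nat.eqb_neq l i)) by lia. rewrite (proj2 (Nat.ltb_ge i l)) by lia. reflexivity.
Qed.

Lemma eta_iiL p q r i : eta p q r i i DL = 0.
Proof. unfold eta. destruct (negb (posb (r i))); auto. rewrite Nat.eqb_refl. reflexivity. Qed.

Lemma eta_0L p q r i : eta p q r i 0 DL = 0.
Proof. destruct i; [apply eta_iiL| apply eta_neg; lia]. Qed.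

Lemma eta_O_inv p q r i l : ~ 0 < r l -> eta p q r i l DO = 0.
Proof.
  intros H. unfold eta. destruct (Nat.eqb_spec l i) as [->|Hne].
  - rewrite posb_false; auto.
  - destruct (negb (posb (r i))); auto. destruct (andb _ _); auto. rewrite posb_false; auto.
Qed.

Lemma eta_R_S p q r i l : 0 < r l -> i <> l -> eta p q r i l DR = 0.
Proof.
  intros H Hne. unfold eta. destruct (negb (posb (r i))); auto.
  rewrite (proj2 (Nat.eqb_neq l i)) by lia. destruct (andb _ _); auto. rewrite posb_true; auto.
Qed.

Lemma eta_R_self p q r l : 0 < r l -> eta p q r l l DR = sg l * Qc p q l * sqrt (qt q l).
Proof. intros H. unfold eta. rewrite posb_true by auto. simpl. rewrite Nat.eqb_refl. reflexivity. Qed.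

Lemma eta_EA p q r (Hp : forall j, 0 <= p j) (Hq : forall j, 0 <= q j) (Hr : forall j, 0 <= r j)
  (Hqpos : forall j, (1 <= j)%nat -> 0 < q j) i j :
  EAv p q r (eta p q r i) j = 0.
Proof.
  unfold EAv, eta. destruct (posb (r i)) eqn:Hi; simpl negb; cbv iota; [|ring].
  apply posb_spec in Hi.
  destruct (Nat.eqb_spec j i) as [->|Hne].
  - match goal with |- ?A * 0 + sqrt (r i) * (?K * - ?S) + ?B = 0 =>
      replace (A * 0 + sqrt (r i) * (K * - S) + B) with (- K * (sqrt (r i) * S) + B) by ring end.
    rewrite key_sqrt; auto. ring. left; apply qt_pos; auto.
  - destruct (andb _ _); [|ring].
    destruct (posb (r j)) eqn:Hj.
    + apply posb_spec in Hj.
      match goal with |- ?A * (?K * - ?P) + sqrt (r j) * (?K * ?S) + ?B = 0 =>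
        replace (A * (K * - P) + sqrt (r j) * (K * S) + B) with (- K * (A * P) + K * (sqrt (r j) * S) + B) by ring end.
      rewrite key_sqrt; auto. ring.
    + ring.
Qed.

Lemma eta_Sinv p q r (Hppos : forall j, 0 < p j) (Hqpos : forall j, (1 <= j)%nat -> 0 < q j) i l :
  eta p q r i l DR = eta p q r i (S l) DL.
Proof.
  unfold eta. destruct (posb (r i)) eqn:Hi; simpl negb; cbv iota; [|reflexivity].
  destruct (Nat.lt_total l i) as [Hlt|[->|Hgt]].
  - rewrite (proj2 (Nat.eqb_neq l i)) by lia. rewrite (proj2 (Nat.ltb_ge i l)) by lia.
    destruct (Nat.eqb_spec (S l) i); [reflexivity|]. rewrite (proj2 (Nat.ltb_ge i (S l))) by lia. reflexivity.
  - rewrite Nat.eqb_refl. rewrite (proj2 (Nat.eqb_neq (S i) i)) by lia.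
    rewrite (proj2 (Nat.ltb_lt i (S i))) by lia. rewrite nsb_succ. simpl andb.
    assert (E := Qc_rec p q Hppos Hqpos i). rewrite sg_S.
    destruct (posb (r (S i))); (transitivity (sg i * (Qc p q i * sqrt (qt q i))); [ring| rewrite <- E; ring]).
  - rewrite (proj2 (Nat.eqb_neq l i)) by lia. rewrite (proj2 (Nat.eqb_neq (S l) i)) by lia.
    rewrite (proj2 (Nat.ltb_lt i l)) by lia. rewrite (proj2 (Nat.ltb_lt i (S l))) by lia. simpl andb.
    destruct (no_S_between r i l) eqn:Hn.
    + destruct (posb (r l)) eqn:Hl.
      * apply posb_spec in Hl. rewrite nsb_S_false2 by auto. reflexivity.
      * rewrite nsb_S_true; auto. 2:{ intro H. apply posb_spec in H. congruence. }
        assert (E := Qc_rec p q Hppos Hqpos l). destruct l; [lia|]. simpl qt in E. rewrite !sg_S.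
        destruct (posb (r (S (S l)))); (transitivity (- sg l * (Qc p q (S l) * sqrt (q (S l)))); [ring| rewrite <- E; ring]).
    + rewrite nsb_S_false1 by auto. reflexivity.
Qed.

Definition realcomb p q r (x : nat -> R) : nat -> dir -> R :=
  fun l d => sum_f_R0 (fun i => x i * eta p q r i l d) l.

Lemma realcomb_ext p q r x l d N : (l <= N)%nat ->
  realcomb p q r x l d = sum_f_R0 (fun i => x i * eta p q r i l d) N.
Proof.
  intros H. unfold realcomb. induction N as [|N IH].
  - assert (l = 0%nat) by lia. subst. reflexivity.
  - destruct (Nat.eq_dec l (S N)) as [->|Hne]; [reflexivity|].
    simpl. rewrite IH by lia. rewrite eta_neg by lia. ring.
Qed.

Lemma loc_ext p q r (f g : nat -> dir -> R) : (forall l d, f l d = g l d) -> loc_eqs p q r g -> loc_eqs p q r f.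
Proof.
  intros H Hg j. destruct (Hg j) as [A B]. unfold EAv, EBv in *. rewrite !H.
  destruct j; rewrite ?H; split; auto.
Qed.

Lemma loc_sub p q r (f g : nat -> dir -> R) : loc_eqs p q r f -> loc_eqs p q r g ->
  loc_eqs p q r (fun l d => f l d - g l d).
Proof.
  intros Hf Hg j. destruct (Hf j) as [A B]. destruct (Hg j) as [C D]. unfold EAv, EBv in *.
  destruct j; split; lra.
Qed.

Lemma loc_zero p q r : loc_eqs p q r (fun _ _ => 0).
Proof. intros j. unfold EAv, EBv. destruct j; split; ring. Qed.

Lemma EB_of_EA p q r (Hq0 : q 0%nat = 0) (f : nat -> dir -> R) j :
  (forall l, f l DR = f (S l) DL) -> EAv p q r f j = 0 -> EBv p q r f j = 0.
Proof.
  intros HS HA. unfold EAv, EBv in *. rewrite <- HS. destruct j as [|j'].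
  - rewrite Hq0, sqrt_0 in HA. lra.
  - rewrite HS. lra.
Qed.

Lemma realcomb_loc p q r (Hp : forall j, 0 <= p j) (Hq : forall j, 0 <= q j) (Hr : forall j, 0 <= r j)
  (Hq0 : q 0%nat = 0) (Hppos : forall j, 0 < p j) (Hqpos : forall j, (1 <= j)%nat -> 0 < q j) x :
  loc_eqs p q r (realcomb p q r x).
Proof.
  assert (HA : forall j, EAv p q r (realcomb p q r x) j = 0).
  { intros j. unfold EAv, realcomb. rewrite sum_lin3. apply sum_zero. intros i.
    pose proof (eta_EA p q r Hp Hq Hr Hqpos i j) as E. unfold EAv in E.
    transitivity (x i * (sqrt (q j) * eta p q r i j DL + sqrt (r j) * eta p q r i j DO + sqrt (p j) * eta p q r i j DR)); [ring|].
    rewrite E; ring. }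
  assert (HS : forall l, realcomb p q r x l DR = realcomb p q r x (S l) DL).
  { intros l. rewrite (realcomb_ext _ _ _ _ (S l) DL (S l)) by lia. simpl sum_f_R0.
    rewrite eta_iiL, Rmult_0_r, Rplus_0_r. unfold realcomb. apply sum_eq. intros i _.
    rewrite eta_Sinv; auto. }
  intros j. split; auto. apply EB_of_EA; auto.
Qed.

Lemma realcomb_R p q r x l : 0 < r l ->
  realcomb p q r x l DR = x l * (sg l * Qc p q l * sqrt (qt q l)).
Proof.
  intros H. unfold realcomb. rewrite (sum_single _ l l) by (lia || (intros i Hi; rewrite eta_R_S; auto; ring)).
  rewrite eta_R_self; auto.
Qed.

Lemma realcomb_0L p q r x : realcomb p q r x 0 DL = 0.
Proof. unfold realcomb. simpl. rewrite eta_0L. ring. Qed.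
Lemma realcomb_O p q r x l : ~ 0 < r l -> realcomb p q r x l DO = 0.
Proof. intros H. unfold realcomb. apply sum_zero. intros i. rewrite eta_O_inv; auto. ring. Qed.

Lemma sqrt_eq0 a x : 0 < a -> sqrt a * x = 0 -> x = 0.
Proof.
  intros Ha H. apply sqrt_lt_R0 in Ha. destruct (Rmult_integral _ _ H); auto; lra.
Qed.

Lemma uniq p q r (Hr : forall j, 0 <= r j) (Hppos : forall j, 0 < p j) (f : nat -> dir -> R) :
  f 0%nat DL = 0 -> (forall l, ~ 0 < r l -> f l DO = 0) -> loc_eqs p q r f ->
  (forall l, 0 < r l -> f l DR = 0) -> forall l d, f l d = 0.
Proof.
  intros H0 HO Hloc HR.
  assert (step : forall l, f l DL = 0 -> (match l with O => 0 | S l' => sqrt (q l) * f l' DR end) = 0 ->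
      f l DO = 0 /\ f l DR = 0 /\ f (S l) DL = 0).
  { intros l HL Hprev. destruct (Hloc l) as [A B]. unfold EAv, EBv in A, B. rewrite HL in A.
    assert (HOR : f l DO = 0 /\ f l DR = 0).
    { destruct (Rlt_dec 0 (r l)) as [Hp|Hn].
      - assert (E := HR l Hp). split; auto. rewrite E in A. apply (sqrt_eq0 (r l)); auto. lra.
      - assert (E := HO l Hn). split; auto. rewrite E in A. apply (sqrt_eq0 (p l)); auto. lra. }
    destruct HOR as [E1 E2]. repeat split; auto. rewrite Hprev, E1 in B.
    apply (sqrt_eq0 (p l)); auto. lra. }
  assert (P : forall l, f l DL = 0 /\ f l DO = 0 /\ f l DR = 0 /\ f (S l) DL = 0).
  { induction l as [|l IH].
    - destruct (step 0%nat H0 eq_refl) as [A [B C]]. auto.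
    - destruct IH as [_ [_ [IH3 IH4]]]. destruct (step (S l) IH4) as [A [B C]].
      + rewrite IH3. ring.
      + auto. }
  intros l d. destruct (P l) as [A [B [C _]]]. destruct d; auto.
Qed.

Lemma Re_eta_comb p q r c l d : Re (eta_comb p q r c l d) = realcomb p q r (fun i => Re (c i)) l d.
Proof. unfold eta_comb, realcomb. rewrite Re_Csum. apply sum_eq. intros. simpl. ring. Qed.
Lemma Im_eta_comb p q r c l d : Im (eta_comb p q r c l d) = realcomb p q r (fun i => Im (c i)) l d.
Proof. unfold eta_comb, realcomb. rewrite Im_Csum. apply sum_eq. intros. simpl. ring. Qed.

Lemma Cext z w : Re z = Re w -> Im z = Im w -> z = w.
Proof. destruct z, w; simpl; intros; subst; reflexivity. Qed.

Lemma Kne p q (Hppos : forall j, 0 < p j) (Hqpos : forall j, (1 <= j)%nat -> 0 < q j) l :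
  sg l * Qc p q l * sqrt (qt q l) <> 0.
Proof.
  assert (sg l <> 0) by (unfold sg; apply pow_nonzero; lra).
  pose proof (Qc_pos p q Hppos Hqpos l). pose proof (sqrt_lt_R0 _ (qt_pos q Hqpos l)).
  intro E. apply Rmult_integral in E. destruct E as [E|E]; [apply Rmult_integral in E; destruct E|]; lra.
Qed.

Lemma l2_inv_Re r (u : vec) : in_l2 r u -> ReF u 0%nat DL = 0 /\ forall l, ~ 0 < r l -> ReF u l DO = 0.
Proof.
  intros [H _]. unfold ReF. split.
  - rewrite H; [reflexivity|]. simpl. lia.
  - intros l Hl. rewrite H; auto.
Qed.
Lemma l2_inv_Im r (u : vec) : in_l2 r u -> ImF u 0%nat DL = 0 /\ forall l, ~ 0 < r l -> ImF u l DO = 0.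
Proof.
  intros [H _]. unfold ImF. split.
  - rewrite H; [reflexivity|]. simpl. lia.
  - intros l Hl. rewrite H; auto.
Qed.

Theorem lemma3 (p q r : nat -> R)
  (Hp : forall j, 0 <= p j) (Hq : forall j, 0 <= q j) (Hr : forall j, 0 <= r j)
  (Hsum : forall j, p j + q j + r j = 1)
  (Hq0 : q 0%nat = 0)
  (Hppos : forall j, 0 < p j)
  (Hqpos : forall j, (1 <= j)%nat -> 0 < q j) :
  (forall phi : vec, in_l2 r phi ->
     (in_HS p q r phi <->
      exists c : nat -> Cplx, forall l d, phi l d = eta_comb p q r c l d))
  /\ ((forall j, ~ 0 < r j) ->
      forall phi : vec, in_HS p q r phi -> forall l d, phi l d = C0)
  /\ (forall j, 0 < r j -> in_l2 r (etaC p q r j) ->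
      U_rel p q r (etaC p q r j) (vopp (etaC p q r j))).
Proof.
  assert (RL := realcomb_loc p q r Hp Hq Hr Hq0 Hppos Hqpos).
  split; [|split].
  - intros phi Hl2. split.
    + intros HS. destruct (HS_loc p q r Hr Hq0 phi HS) as [LR LI].
      set (K := fun l => sg l * Qc p q l * sqrt (qt q l)).
      exists (fun l => mkC (Re (phi l DR) / K l) (Im (phi l DR) / K l)).
      destruct (l2_inv_Re r phi Hl2) as [R0 RO]. destruct (l2_inv_Im r phi Hl2) as [I0 IO].
      assert (GR := uniq p q r Hr Hppos (fun l d => ReF phi l d - realcomb p q r (fun l => Re (phi l DR) / K l) l d)).
      assert (GI := uniq p q r Hr Hppos (fun l d => ImF phi l d - realcomb p q r (fun l => Im (phi l DR) / K l) l d)).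
      intros l d. apply Cext.
      * rewrite Re_eta_comb. cbn [Re]. apply Rminus_diag_uniq. apply GR.
        -- cbv beta. rewrite R0, realcomb_0L. ring.
        -- intros m Hm. cbv beta. rewrite RO, realcomb_O by auto. ring.
        -- apply loc_sub; auto.
        -- intros m Hm. cbv beta. rewrite realcomb_R by auto. unfold ReF. fold (K m). field. apply Kne; auto.
      * rewrite Im_eta_comb. cbn [Im]. apply Rminus_diag_uniq. apply GI.
        -- cbv beta. rewrite I0, realcomb_0L. ring.
        -- intros m Hm. cbv beta. rewrite IO, realcomb_O by auto. ring.
        -- apply loc_sub; auto.
        -- intros m Hm. cbv beta. rewrite realcomb_R by auto. unfold ImF. fold (K m). field. apply Kne; auto.
    + intros [c Hc]. split; auto. destruct Hl2 as [Hv [B HB]].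
      apply (ortho_HR p q r phi B); auto.
      * apply (loc_ext _ _ _ _ (realcomb p q r (fun i => Re (c i)))); auto.
        intros l d. unfold ReF. rewrite Hc. apply Re_eta_comb.
      * apply (loc_ext _ _ _ _ (realcomb p q r (fun i => Im (c i)))); auto.
        intros l d. unfold ImF. rewrite Hc. apply Im_eta_comb.
  - intros Hnone phi HS. destruct (HS_loc p q r Hr Hq0 phi HS) as [LR LI].
    destruct HS as [Hl2 _].
    destruct (l2_inv_Re r phi Hl2) as [R0 RO]. destruct (l2_inv_Im r phi Hl2) as [I0 IO].
    intros l d. apply Cext.
    + apply (uniq p q r Hr Hppos (ReF phi)); auto. intros m Hm; exfalso; apply (Hnone m Hm).
    + apply (uniq p q r Hr Hppos (ImF phi)); auto. intros m Hm; exfalso; apply (Hnone m Hm).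
  - intros j Hj Hl2. exists vzero. split.
    + split.
      * split.
        -- split; [intros; reflexivity|]. exists 0. intros n. unfold norm2_partial.
           rewrite sum_zero; [lra|]. intros l. unfold dsum, vzero. rewrite Cnorm2_C0. ring.
        -- intros eps Heps. exists (fun _ => C0), 0%nat. intros n. unfold norm2_partial.
           rewrite sum_zero; [lra|]. intros l. unfold dsum, vsub, Csub, Cadd, Copp, Cnorm2, vzero, comb_a. simpl. ring.
      * destruct Hl2 as [_ [B HB]].
        apply (ortho_A p q r _ B).
        -- apply (loc_ext _ _ _ _ (eta p q r j)).
           ++ intros l d. unfold ReF, vsub, Csub, Cadd, Copp, vzero, etaC, vR. simpl. ring.
           ++ intros i. split; [apply eta_EA; auto|]. apply EB_of_EA; auto.
              intros l. apply eta_Sinv; auto. apply eta_EA; auto.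
        -- apply (loc_ext _ _ _ _ (fun _ _ => 0)); [|apply loc_zero].
           intros l d. unfold ImF, vsub, Csub, Cadd, Copp, vzero, etaC, vR. simpl. ring.
        -- intros n. eapply Rle_trans; [|apply (HB n)]. right. unfold norm2_partial.
           apply sum_eq. intros i _. unfold dsum, vsub, Csub, Cadd, Copp, Cnorm2, vzero. simpl. ring.
    + intros l d. unfold vopp, shift, vsub, vadd, Csub, vzero, etaC, vR. destruct d.
      * destruct l as [|l'].
        -- rewrite eta_0L. apply Cext; simpl; ring.
        -- rewrite <- (eta_Sinv p q r Hppos Hqpos j l'). apply Cext; simpl; ring.
      * apply Cext; simpl; ring.
      * rewrite (eta_Sinv p q r Hppos Hqpos j l). apply Cext; simpl; ring.
Qed.
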